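(* The bi-immune symmetric group $G_{\mathfrak{B}}$ is highly transitive: for every $k \geq 1$ and any two $k$-tuples $(a_1, \dots, a_k)$, $(b_1, \dots, b_k)$ of natural numbers, each with pairwise distinct entries, there exists $\sigma \in G_{\mathfrak{B}}$ with $\sigma(a_i) = b_i$ for $1 \le i \le k$.
   Context: $\mathbb{N}$ denotes the non-negative integers, and $\mathrm{Sym}(\mathbb{N})$ the group of all permutations of $\mathbb{N}$ under composition ($g \circ f$ means apply $f$ first). For $i \in \mathbb{N}$, $\sigma_{(i)}$ is the permutation swapping $i$ and $i+1$ and fixing all other numbers. For $A \subseteq \mathbb{N}$ with increasing enumeration $a_0 < a_1 < \cdots$, define $\sigma_A(x) = \lim_{n \to \infty} (\sigma_{(a_0)} \circ \sigma_{(a_1)} \circ \cdots \circ \sigma_{(a_n)})(x)$ (eventually constant for each $x$). A set $A$ is immune if it is infinite and contains no infinite computably enumerable subset; $A$ is bi-immune if both $A$ and $\mathbb{N} - A$ are immune. For bi-immune $A$, $\sigma_A$ is a permutation of $\mathbb{N}$. The bi-immune symmetric group $G_{\mathfrak{B}}$ is the subgroup of $\mathrm{Sym}(\mathbb{N})$ generated by $\{\sigma_A : A \text{ bi-immune}\}$. *)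

(* Defs.v *)
From Stdlib Require Import Arith List Lia.
Import ListNotations.

Inductive code : Type :=
| CZero : code
| CSucc : code
| CProj : nat -> code
| CComp : code -> list code -> code
| CPrim : code -> code -> code
| CMu   : code -> code.

Inductive eval : code -> list nat -> nat -> Prop :=
| ev_zero v : eval CZero v 0
| ev_succ x v : eval CSucc (x :: v) (S x)
| ev_proj i v : i < length v -> eval (CProj i) v (nth i v 0)
| ev_comp f gs v ws y : evalL gs v ws -> eval f ws y -> eval (CComp f gs) v y
| ev_prim0 f g v y : eval f v y -> eval (CPrim f g) (0 :: v) y
| ev_primS f g n v z y :
    eval (CPrim f g) (n :: v) z -> eval g (n :: z :: v) y ->
    eval (CPrim f g) (S n :: v) y
| ev_mu f v n :
    eval f (n :: v) 0 ->
    (forall m, m < n -> exists k, eval f (m :: v) (S k)) ->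
    eval (CMu f) v n
with evalL : list code -> list nat -> list nat -> Prop :=
| evL_nil v : evalL [] v []
| evL_cons g gs v w ws : eval g v w -> evalL gs v ws -> evalL (g :: gs) v (w :: ws).

Definition ce (W : nat -> Prop) : Prop :=
  exists c : code, forall x, W x <-> exists y, eval c [x] y.

Definition infinite_set (A : nat -> Prop) : Prop :=
  forall n, exists m, n <= m /\ A m.

Definition immune (A : nat -> Prop) : Prop :=
  infinite_set A /\
  ~ (exists W, ce W /\ infinite_set W /\ forall x, W x -> A x).

Definition bi_immune (A : nat -> bool) : Prop :=
  immune (fun x => A x = true) /\ immune (fun x => A x = false).

Definition swap (i x : nat) : nat :=
  if Nat.eqb x i then S i else if Nat.eqb x (S i) then i else x.

(** [partial_comp A N] = sigma_(a_0) o sigma_(a_1) o ... o sigma_(a_j),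
    where a_0 < ... < a_j are the elements of A below N. *)
Fixpoint partial_comp (A : nat -> bool) (N : nat) (x : nat) : nat :=
  match N with
  | 0 => x
  | S N' => partial_comp A N' (if A N' then swap N' x else x)
  end.

(** [sigma_lim A x y]: sigma_A(x) = y, i.e. the partial compositions are
    eventually constant with value y at x. *)
Definition sigma_lim (A : nat -> bool) (x y : nat) : Prop :=
  exists N0, forall N, N0 <= N -> partial_comp A N x = y.

(** Membership in the bi-immune symmetric group G_B: finite products of
    generators sigma_A and their inverses, A bi-immune. *)
Inductive inGB : (nat -> nat) -> Prop :=
| GB_id : inGB (fun x => x)
| GB_gen (A : nat -> bool) (s g : nat -> nat) :
    bi_immune A -> (forall x, sigma_lim A x (s x)) -> inGB g ->
    inGB (fun x => s (g x))
| GB_inv (A : nat -> bool) (t g : nat -> nat) :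
    bi_immune A -> (forall x, sigma_lim A (t x) x) -> inGB g ->
    inGB (fun x => t (g x)).

(* Main.v *)
Require Import Defs.
From Stdlib Require Import Arith List Lia Cantor Classical ClassicalEpsilon.
Import ListNotations.

Definition P2 (a b : nat) : nat := Cantor.to_nat (a, b).
Lemma P2_inj a b c d : P2 a b = P2 c d -> a = c /\ b = d.
Proof. intro H. assert (H' := f_equal Cantor.of_nat H). unfold P2 in H'.
  rewrite !Cantor.cancel_of_to in H'. now inversion H'. Qed.

Fixpoint encl (l : list nat) : nat :=
  match l with [] => 0 | x :: l => S (P2 x (encl l)) end.
Lemma encl_inj l1 l2 : encl l1 = encl l2 -> l1 = l2.
Proof. revert l2; induction l1 as [|x l1 IH]; intros [|y l2]; simpl; try discriminate; auto.
  intro H; injection H as H; apply P2_inj in H as [-> H]; f_equal; auto. Qed.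

Fixpoint enc (c : code) : nat :=
  match c with
  | CZero => P2 0 0
  | CSucc => P2 1 0
  | CProj i => P2 2 i
  | CComp f gs => P2 3 (P2 (enc f) (encl (map enc gs)))
  | CPrim f g => P2 4 (P2 (enc f) (enc g))
  | CMu f => P2 5 (enc f)
  end.

Definition code_ind2 (P : code -> Prop) (H0 : P CZero) (H1 : P CSucc)
  (H2 : forall i, P (CProj i))
  (H3 : forall f gs, P f -> Forall P gs -> P (CComp f gs))
  (H4 : forall f g, P f -> P g -> P (CPrim f g))
  (H5 : forall f, P f -> P (CMu f)) : forall c, P c :=
  fix F c := match c with
  | CZero => H0 | CSucc => H1 | CProj i => H2 i
  | CComp f gs => H3 f gs (F f)
      ((fix G l := match l return Forall P l with
        | [] => Forall_nil P | g :: l' => Forall_cons g (F g) (G l') end) gs)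
  | CPrim f g => H4 f g (F f) (F g)
  | CMu f => H5 f (F f)
  end.

Lemma map_inj_Forall (P : code -> Prop) l1 l2 :
  Forall (fun c => forall d, enc c = enc d -> c = d) l1 ->
  map enc l1 = map enc l2 -> l1 = l2.
Proof. revert l2; induction l1 as [|x l1 IH]; intros [|y l2] HF; simpl; try discriminate; auto.
  inversion HF; subst. intro H; injection H as H H'. f_equal; auto. Qed.

Lemma enc_inj : forall c d, enc c = enc d -> c = d.
Proof.
  apply (code_ind2 (fun c => forall d, enc c = enc d -> c = d));
  [ | | intros i | intros f gs IHf IHgs | intros f g IHf IHg | intros f IHf ];
  intros [ | | j | f' gs' | f' g' | f' ] H; simpl in H;
  apply P2_inj in H as [Ht H]; try discriminate; auto.
  all: try (subst; reflexivity).
  - apply P2_inj in H as [H1 H2]. apply IHf in H1; subst.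
    apply encl_inj in H2. apply (map_inj_Forall (fun _ => True)) in H2; subst; auto.
  - apply P2_inj in H as [H1 H2]. apply IHf in H1; apply IHg in H2; subst; auto.
  - apply IHf in H; subst; auto.
Qed.

Definition enum (n : nat) : code :=
  match excluded_middle_informative (exists c, enc c = n) with
  | left H => proj1_sig (constructive_indefinite_description _ H)
  | right _ => CZero end.

Lemma enum_enc c : enum (enc c) = c.
Proof. unfold enum. destruct excluded_middle_informative as [H|H].
  - destruct constructive_indefinite_description as [d Hd]; simpl. now apply enc_inj.
  - exfalso; eauto. Qed.
Definition Wn (n z : nat) : Prop := exists y, eval (enum n) [z] y.

Lemma pick_ex n m : exists q : nat * nat, m <= fst q /\ fst q < snd q /\
  (infinite_set (Wn n) -> Wn n (fst q) /\ Wn n (snd q)).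
Proof.
  destruct (classic (infinite_set (Wn n))) as [Hi|Hn].
  - destruct (Hi m) as [x [Hx1 Hx2]]. destruct (Hi (S x)) as [y [Hy1 Hy2]].
    exists (x, y); simpl; repeat split; auto.
  - exists (m, S m); simpl; split; [lia|split; [lia|intro HH; contradiction]].
Qed.

Definition pick n m : nat * nat := proj1_sig (constructive_indefinite_description _ (pick_ex n m)).
Lemma pick_spec n m : m <= fst (pick n m) /\ fst (pick n m) < snd (pick n m) /\
  (infinite_set (Wn n) -> Wn n (fst (pick n m)) /\ Wn n (snd (pick n m))).
Proof. unfold pick. destruct constructive_indefinite_description; auto. Qed.

Section Constr.
Variable M : nat.
Variable p : nat -> bool.

Fixpoint mseq (n : nat) : nat :=
  match n with 0 => M | S n => S (snd (pick n (mseq n))) end.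
Definition xs n := fst (pick n (mseq n)).
Definition ys n := snd (pick n (mseq n)).

Lemma xs_ys n : mseq n <= xs n /\ xs n < ys n /\ ys n < mseq (S n).
Proof. unfold xs, ys; simpl. destruct (pick_spec n (mseq n)) as [? [? ?]]; lia. Qed.

Lemma mseq_mono i j : i <= j -> mseq i <= mseq j.
Proof. induction 1; auto. pose proof (xs_ys m); lia. Qed.

Lemma mseq_ge n : n + M <= mseq n.
Proof. induction n; simpl; auto. pose proof (xs_ys n); simpl in *; lia. Qed.

Lemma ys_xs n j : ys n <> xs j.
Proof.
  destruct (lt_eq_lt_dec j n) as [[Hl|He]|Hg].
  - pose proof (xs_ys j); pose proof (xs_ys n); pose proof (mseq_mono (S j) n Hl); lia.
  - subst; pose proof (xs_ys n); lia.
  - pose proof (xs_ys j); pose proof (xs_ys n); pose proof (mseq_mono (S n) j Hg); lia.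
Qed.

Definition Acon (z : nat) : bool :=
  if z <? M then p z else
  if excluded_middle_informative (exists n, xs n = z) then true else false.

Lemma Acon_xs n : Acon (xs n) = true.
Proof. unfold Acon. pose proof (xs_ys n); pose proof (mseq_ge n).
  destruct (Nat.ltb_spec (xs n) M); [lia|].
  destruct excluded_middle_informative as [_|H']; auto. exfalso; eauto. Qed.

Lemma Acon_ys n : Acon (ys n) = false.
Proof. unfold Acon. pose proof (xs_ys n); pose proof (mseq_ge n).
  destruct (Nat.ltb_spec (ys n) M); [lia|].
  destruct excluded_middle_informative as [[j Hj]|H']; auto.
  exfalso; apply (ys_xs n j); auto. Qed.

Lemma Wn_ce W c : (forall x, W x <-> exists y, eval c [x] y) ->
  forall x, W x <-> Wn (enc c) x.
Proof. intros H x. unfold Wn. rewrite enum_enc. apply H. Qed.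

Lemma Acon_bi : bi_immune Acon.
Proof.
  split; split.
  - intro N. exists (xs N). pose proof (xs_ys N); pose proof (mseq_ge N).
    split; [lia| apply Acon_xs].
  - intros [W [[c Hc] [Hinf Hsub]]].
    pose proof (Wn_ce W c Hc) as E.
    assert (Hi : infinite_set (Wn (enc c))).
    { intro N; destruct (Hinf N) as [m [? ?]]; exists m; split; auto; apply E; auto. }
    destruct (pick_spec (enc c) (mseq (enc c))) as [_ [_ H]].
    destruct (H Hi) as [_ Hy]. apply E in Hy. apply Hsub in Hy.
    fold (ys (enc c)) in Hy. rewrite Acon_ys in Hy; discriminate.
  - intro N. exists (ys N). pose proof (xs_ys N); pose proof (mseq_ge N).
    split; [lia| apply Acon_ys].
  - intros [W [[c Hc] [Hinf Hsub]]].
    pose proof (Wn_ce W c Hc) as E.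
    assert (Hi : infinite_set (Wn (enc c))).
    { intro N; destruct (Hinf N) as [m [? ?]]; exists m; split; auto; apply E; auto. }
    destruct (pick_spec (enc c) (mseq (enc c))) as [_ [_ H]].
    destruct (H Hi) as [Hx _]. apply E in Hx. apply Hsub in Hx.
    fold (xs (enc c)) in Hx. rewrite Acon_xs in Hx; discriminate.
Qed.

Lemma Acon_prefix z : z < M -> Acon z = p z.
Proof. intro H. unfold Acon. destruct (Nat.ltb_spec z M); auto; lia. Qed.
End Constr.

Lemma exists_bi_immune M p : exists A, bi_immune A /\ forall z, z < M -> A z = p z.
Proof. exists (Acon M p). split. apply Acon_bi. apply Acon_prefix. Qed.
Lemma pc_stab A x N : S x <= N -> partial_comp A N x = partial_comp A (S x) x.
Proof. induction 1; auto. simpl. destruct (A m); auto.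
  unfold swap. destruct (Nat.eqb_spec x m); [lia|]. destruct (Nat.eqb_spec x (S m)); [lia|]. auto. Qed.

Lemma gen_inGB A g : bi_immune A -> inGB g -> inGB (fun x => partial_comp A (S (g x)) (g x)).
Proof.
  intros HA Hg. set (s := fun x => partial_comp A (S x) x).
  change (inGB (fun x => s (g x))). apply GB_gen with A; auto.
  intro x. exists (S x). intros N HN. apply pc_stab; auto. Qed.

Lemma pc_false A N y : (forall z, z < N -> A z = false) -> partial_comp A N y = y.
Proof. revert y; induction N; intros y H; simpl; auto. rewrite H by lia. apply IHN; intros; apply H; lia. Qed.

Lemma pc_single A M i y N : (forall z, z < M -> A z = Nat.eqb z i) -> S i <= N -> N <= M ->
  partial_comp A N y = swap i y.
Proof.
  intros HA H1 H2. induction H1.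
  - simpl. rewrite HA by lia. rewrite Nat.eqb_refl. apply pc_false.
    intros z Hz; rewrite HA by lia. apply Nat.eqb_neq; lia.
  - simpl. rewrite HA by lia. destruct (Nat.eqb_spec m i); [lia|]. apply IHle; lia.
Qed.

Lemma swap_gen M i : S i < M -> exists s, (forall g, inGB g -> inGB (fun x => s (g x))) /\
  forall x, x < M -> s x = swap i x.
Proof.
  intro Hi. destruct (exists_bi_immune M (fun z => Nat.eqb z i)) as [A [HA Hp]].
  exists (fun x => partial_comp A (S x) x). split.
  - intros g Hg. apply (gen_inGB A g HA Hg).
  - intros x Hx. destruct (le_lt_dec i x).
    + apply (pc_single A M); auto; lia.
    + rewrite pc_false. unfold swap. destruct (Nat.eqb_spec x i); [lia|].
      destruct (Nat.eqb_spec x (S i)); [lia|]; auto.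
      intros z Hz; rewrite Hp by lia. apply Nat.eqb_neq; lia.
Qed.

Section Comb.
Variable M : nat.
Definition Good (f : nat -> nat) : Prop :=
  (exists g, inGB g /\ forall x, x < M -> g x = f x) /\
  (forall x, x < M -> f x < M) /\
  (forall x y, x < M -> y < M -> f x = f y -> x = y).

Lemma Good_id : Good (fun x => x).
Proof. split; [exists (fun x => x); split; [constructor|auto]|split; auto]. Qed.

Lemma Good_ext f f' : Good f -> (forall x, x < M -> f x = f' x) -> Good f'.
Proof. intros [[g [Hg Hgf]] [H1 H2]] E. split; [exists g; split; auto; intros; rewrite Hgf, E; auto|].
  split; intros; rewrite <- ?E; auto. apply H2; auto. rewrite !E; auto. Qed.

Lemma swap_lt i x : S i < M -> x < M -> swap i x < M.
Proof. intros. unfold swap. destruct (Nat.eqb_spec x i); [lia|]. destruct (Nat.eqb_spec x (S i)); lia. Qed.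
Lemma swap_inv i x : swap i (swap i x) = x.
Proof. unfold swap. destruct (Nat.eqb_spec x i); subst.
  - rewrite (proj2 (Nat.eqb_neq (S i) i)) by lia. rewrite Nat.eqb_refl; auto.
  - destruct (Nat.eqb_spec x (S i)); subst. rewrite Nat.eqb_refl; auto.
    rewrite (proj2 (Nat.eqb_neq x i)), (proj2 (Nat.eqb_neq x (S i))); auto. Qed.

Lemma Good_swap i f : S i < M -> Good f -> Good (fun x => swap i (f x)).
Proof.
  intros Hi [[g [Hg Hgf]] [H1 H2]]. destruct (swap_gen M i Hi) as [s [Hs Hsw]].
  split; [exists (fun x => s (g x)); split; auto; intros x Hx; rewrite Hgf, Hsw; auto|].
  split.
  - intros; apply swap_lt; auto.
  - intros x y Hx Hy E. apply H2; auto. rewrite <- (swap_inv i (f x)), E. apply swap_inv.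
Qed.

Definition tr (u v x : nat) := if Nat.eqb x u then v else if Nat.eqb x v then u else x.

Lemma tr_good_aux d : forall u f, u + S d < M -> Good f -> Good (fun x => tr u (u + S d) (f x)).
Proof.
  induction d; intros u f Hu Hf.
  - apply Good_ext with (fun x => swap u (f x)). apply Good_swap; auto; lia.
    intros x _. unfold tr, swap. replace (u + 1) with (S u) by lia. auto.
  - apply Good_ext with (fun x => swap u (tr (S u) (S u + S d) (swap u (f x)))).
    + apply Good_swap; [lia|]. apply IHd; [lia|]. apply Good_swap; auto; lia.
    + intros x _. set (y := f x). unfold tr, swap.
      repeat (match goal with
        | |- context [Nat.eqb ?a ?b] => destruct (Nat.eqb_spec a b)
        | H : context [Nat.eqb ?a ?b] |- _ => destruct (Nat.eqb_spec a b) end; cbv iota in *); lia.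
Qed.

Lemma tr_good u v f : u < M -> v < M -> Good f -> Good (fun x => tr u v (f x)).
Proof.
  intros Hu Hv Hf. destruct (lt_eq_lt_dec u v) as [[H|H]|H].
  - replace v with (u + S (v - u - 1)) by lia. apply tr_good_aux; auto; lia.
  - subst. apply Good_ext with f; auto. intros x _; unfold tr.
    destruct (Nat.eqb_spec (f x) v); auto.
  - apply Good_ext with (fun x => tr v (v + S (u - v - 1)) (f x)).
    apply tr_good_aux; auto; lia.
    intros x _. replace (v + S (u - v - 1)) with u by lia. unfold tr.
    destruct (Nat.eqb_spec (f x) v); destruct (Nat.eqb_spec (f x) u); lia.
Qed.

Lemma main_comb : forall a b, length a = length b -> NoDup a -> NoDup b ->
  (forall x, In x a -> x < M) -> (forall x, In x b -> x < M) ->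
  exists f, Good f /\ forall i, i < length a -> f (nth i a 0) = nth i b 0.
Proof.
  induction a as [|a1 a IH]; intros [|b1 b] Hl Ha Hb HaM HbM; simpl in Hl; try discriminate.
  - exists (fun x => x); split; [apply Good_id|simpl; intros; lia].
  - inversion Ha; inversion Hb; subst.
    destruct (IH b) as [f [Hf Hfab]]; auto; try (intros; simpl in *; auto).
    assert (Ha1 : a1 < M) by (apply HaM; simpl; auto).
    assert (Hb1 : b1 < M) by (apply HbM; simpl; auto).
    pose proof Hf as [_ [HfM Hfinj]].
    exists (fun x => tr (f a1) b1 (f x)). split.
    + apply tr_good; auto.
    + intros [|i] Hi; simpl.
      * unfold tr; rewrite Nat.eqb_refl; auto.
      * simpl in Hi. rewrite Hfab by lia. unfold tr.
        assert (Hin : In (nth i b 0) b) by (apply nth_In; lia).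
        assert (Hina : In (nth i a 0) a) by (apply nth_In; lia).
        destruct (Nat.eqb_spec (nth i b 0) (f a1)).
        { exfalso. rewrite <- Hfab in e by lia.
          assert (nth i a 0 < M) by (apply HaM; simpl; auto).
          apply Hfinj in e; auto. rewrite e in Hina; contradiction. }
        destruct (Nat.eqb_spec (nth i b 0) b1); auto. subst; contradiction.
Qed.
End Comb.

Theorem mainTheorem7 :
  forall (k : nat) (a b : list nat),
    1 <= k -> length a = k -> length b = k -> NoDup a -> NoDup b ->
    exists sigma : nat -> nat,
      inGB sigma /\ forall i, i < k -> sigma (nth i a 0) = nth i b 0.
Proof.
  intros k a b _ Ha Hb Hna Hnb.
  set (M := S (list_max (a ++ b))).
  assert (HM : forall x, In x (a ++ b) -> x < M).
  { intros x Hx. unfold M. assert (x <= list_max (a ++ b)); [|lia].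
    pose proof (proj1 (list_max_le (a ++ b) (list_max (a ++ b))) (le_n _)) as HF.
    rewrite Forall_forall in HF; auto. }
  destruct (main_comb M a b) as [f [[[g [Hg Hgf]] _] Hf]]; try congruence; auto.
  - intros; apply HM; apply in_or_app; auto.
  - intros; apply HM; apply in_or_app; auto.
  - exists g; split; auto. intros i Hi. rewrite Hgf. apply Hf; lia.
    apply HM, in_or_app; left; apply nth_In; lia.
Qed.
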